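(* For a random subcomplex $X$ of $\triangle_n$ the following are equivalent: (1) $X$ is spatially independent; (2) for all $Y_1,Y_2\in S_n$ with $\mathbb{P}(Y_2\subset X)>0$, $\mathbb{P}(Y_1\subset X\mid Y_2\subset X)=\mathbb{P}(Y_1\subset X\mid Y_1\cap Y_2\subset X)$; (3) for all $Y_1,Y_2\in S_n$ with $\mathbb{P}(Y_1\cap Y_2\subset X)>0$, $\mathbb{P}(Y_1\cup Y_2\subset X\mid Y_1\cap Y_2\subset X)=\mathbb{P}(Y_1\subset X\mid Y_1\cap Y_2\subset X)\,\mathbb{P}(Y_2\subset X\mid Y_1\cap Y_2\subset X)$; (4) for all $Y_1,Y_2,Z\in S_n$ with $Y_1\cap Y_2\subset Z$ and $\mathbb{P}(Z\subset X)>0$, $\mathbb{P}(Y_1\cup Y_2\subset X\mid Z\subset X)=\mathbb{P}(Y_1\subset X\mid Z\subset X)\,\mathbb{P}(Y_2\subset X\mid Z\subset X)$.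
   Context: $\triangle_n=2^{[n]}$; $S_n$ is the set of subcomplexes of $\triangle_n$ (families of subsets of $[n]$ closed under taking subsets); a random subcomplex is an $S_n$-valued random variable. $X$ is spatially independent if $\mathbb{P}(Y_1\cup Y_2\subset X)\,\mathbb{P}(Y_1\cap Y_2\subset X)=\mathbb{P}(Y_1\subset X)\,\mathbb{P}(Y_2\subset X)$ for all $Y_1,Y_2\in S_n$. *)

(* Defs.v *)
From HB Require Import structures.
From mathcomp Require Import all_boot all_order all_algebra.
Set Implicit Arguments. Unset Strict Implicit. Unset Printing Implicit Defensive.
Import Order.TTheory GRing.Theory Num.Theory.
Local Open Scope ring_scope.

(* Faces of the full simplex on [n] = {0,..,n-1} are subsets of 'I_n;
   a family of faces is a {set {set 'I_n}}. *)
Definition is_complex (n : nat) (Y : {set {set 'I_n}}) : bool :=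
  [forall s : {set 'I_n}, forall t : {set 'I_n},
     (s \in Y) && (t \subset s) ==> (t \in Y)].

Definition random_subcomplex (R : realFieldType) (n : nat)
    (p : {set {set 'I_n}} -> R) : Prop :=
  [/\ forall X, 0 <= p X,
      \sum_(X : {set {set 'I_n}}) p X = 1
    & forall X, p X != 0 -> is_complex X].

Definition Pin (R : realFieldType) (n : nat) (p : {set {set 'I_n}} -> R)
    (Y : {set {set 'I_n}}) : R :=
  \sum_(X : {set {set 'I_n}} | Y \subset X) p X.

Definition Pcond (R : realFieldType) (n : nat) (p : {set {set 'I_n}} -> R)
    (Y1 Y2 : {set {set 'I_n}}) : R :=
  (\sum_(X : {set {set 'I_n}} | (Y1 \subset X) && (Y2 \subset X)) p X)
    / Pin p Y2.

Definition spatially_independent (R : realFieldType) (n : nat)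
    (p : {set {set 'I_n}} -> R) : Prop :=
  forall Y1 Y2 : {set {set 'I_n}}, is_complex Y1 -> is_complex Y2 ->
    Pin p (Y1 :|: Y2) * Pin p (Y1 :&: Y2) = Pin p Y1 * Pin p Y2.

(* Main.v *)
Require Import Defs.
From HB Require Import structures.
From mathcomp Require Import all_boot all_order all_algebra.
From mathcomp Require Import ring.
Import Order.TTheory GRing.Theory Num.Theory.
Local Open Scope ring_scope.

Section Aux.
Variables (R : realFieldType) (n : nat) (p : {set {set 'I_n}} -> R).
Hypothesis hp : random_subcomplex p.

Lemma cplxU (A B : {set {set 'I_n}}) : is_complex A -> is_complex B -> is_complex (A :|: B).
Proof.
move=> /forallP hA /forallP hB; apply/forallP=> s; apply/forallP=> t.
apply/implyP=> /andP[]; rewrite !inE => /orP[hs|hs] ht.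
  by rewrite (implyP (forallP (hA s) t)) ?hs ?ht.
by rewrite (implyP (forallP (hB s) t)) ?hs ?ht ?orbT.
Qed.

Lemma cplxI (A B : {set {set 'I_n}}) : is_complex A -> is_complex B -> is_complex (A :&: B).
Proof.
move=> /forallP hA /forallP hB; apply/forallP=> s; apply/forallP=> t.
apply/implyP=> /andP[]; rewrite !inE => /andP[hs1 hs2] ht.
by rewrite (implyP (forallP (hA s) t)) ?hs1 ?ht // (implyP (forallP (hB s) t)) ?hs2 ?ht.
Qed.

Lemma PcondE (A B : {set {set 'I_n}}) : Pcond p A B = Pin p (A :|: B) / Pin p B.
Proof. by rewrite /Pcond /Pin; congr (_ / _); apply: eq_bigl => X; rewrite subUset. Qed.

Lemma Pin_ge0 (A : {set {set 'I_n}}) : 0 <= Pin p A.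
Proof. case: hp => h0 _ _; exact: sumr_ge0. Qed.

Lemma Pin_mono (A B : {set {set 'I_n}}) : A \subset B -> Pin p B <= Pin p A.
Proof.
case: hp => h0 _ _ AB; rewrite /Pin.
rewrite [X in _ <= X](bigID (fun X : {set {set 'I_n}} => B \subset X)) /=.
rewrite -[X in X <= _]addr0 lerD ?sumr_ge0 //.
rewrite le_eqVlt; apply/orP; left; apply/eqP; apply: eq_bigl => X.
case: (boolP (B \subset X)) => hB; rewrite ?andbT ?andbF //.
by rewrite (subset_trans AB hB).
Qed.

Lemma Pin0 (A B : {set {set 'I_n}}) : A \subset B -> Pin p A = 0 -> Pin p B = 0.
Proof. by move=> AB h; apply/eqP; rewrite eq_le Pin_ge0 andbT -h Pin_mono. Qed.

Lemma alg1 (a b c d : R) : c != 0 -> a * c = b * d -> a / c = b / c * (d / c).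
Proof.
move=> hc H; have -> : a = b * d / c by rewrite -H mulfK.
by field.
Qed.

Lemma alg2 (a b c d : R) : c != 0 -> a / c = b / c * (d / c) -> a * c = b * d.
Proof.
move=> hc H; have := congr1 ( *%R^~ c) H; rewrite divfK // => ->.
field; done.
Qed.

Definition P1 := spatially_independent p.
Definition P2 := forall Y1 Y2 : {set {set 'I_n}}, is_complex Y1 -> is_complex Y2 ->
         0 < Pin p Y2 -> Pcond p Y1 Y2 = Pcond p Y1 (Y1 :&: Y2).
Definition P3 := forall Y1 Y2 : {set {set 'I_n}}, is_complex Y1 -> is_complex Y2 ->
         0 < Pin p (Y1 :&: Y2) ->
         Pcond p (Y1 :|: Y2) (Y1 :&: Y2)
           = Pcond p Y1 (Y1 :&: Y2) * Pcond p Y2 (Y1 :&: Y2).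
Definition P4 := forall Y1 Y2 Z : {set {set 'I_n}},
         is_complex Y1 -> is_complex Y2 -> is_complex Z ->
         Y1 :&: Y2 \subset Z -> 0 < Pin p Z ->
         Pcond p (Y1 :|: Y2) Z = Pcond p Y1 Z * Pcond p Y2 Z.

Lemma UI1 (A B : {set {set 'I_n}}) : A :|: (A :&: B) = A.
Proof. by apply/setUidPl; rewrite subsetIl. Qed.
Lemma UI2 (A B : {set {set 'I_n}}) : B :|: (A :&: B) = B.
Proof. by apply/setUidPl; rewrite subsetIr. Qed.

Lemma UU (A B : {set {set 'I_n}}) : (A :|: B) :|: (A :&: B) = A :|: B.
Proof. by apply/setUidPl; apply: subset_trans (subsetIl _ _) (subsetUl _ _). Qed.

Lemma i12 : P1 -> P2.
Proof.
move=> H Y1 Y2 c1 c2 h2; rewrite !PcondE UI1.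
have hI : 0 < Pin p (Y1 :&: Y2) by apply: (lt_le_trans h2); apply: Pin_mono; rewrite subsetIr.
apply/eqP; rewrite eqr_div ?(lt0r_neq0 h2) ?(lt0r_neq0 hI) // H //.
Qed.

Lemma i21 : P2 -> P1.
Proof.
move=> H Y1 Y2 c1 c2.
have := Pin_ge0 Y2; rewrite le_eqVlt => /orP[/eqP h0|h2].
  by rewrite -h0 (@Pin0 Y2 (Y1 :|: Y2)) ?subsetUr // mul0r mulr0.
have hI : 0 < Pin p (Y1 :&: Y2) by apply: (lt_le_trans h2); apply: Pin_mono; rewrite subsetIr.
have := H Y1 Y2 c1 c2 h2; rewrite !PcondE UI1 => /eqP.
by rewrite eqr_div ?(lt0r_neq0 h2) ?(lt0r_neq0 hI) // => /eqP.
Qed.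

Lemma i13 : P1 -> P3.
Proof.
move=> H Y1 Y2 c1 c2 hI; rewrite !PcondE UI1 UI2 UU.
by apply: alg1; rewrite ?(lt0r_neq0 hI) // H.
Qed.

Lemma i31 : P3 -> P1.
Proof.
move=> H Y1 Y2 c1 c2.
have := Pin_ge0 (Y1 :&: Y2); rewrite le_eqVlt => /orP[/eqP h0|hI].
  by rewrite -h0 (@Pin0 (Y1 :&: Y2) Y1 (subsetIl _ _)) ?mulr0 ?mul0r.
have := H Y1 Y2 c1 c2 hI.
rewrite !PcondE UI1 UI2 UU.
by apply: alg2; rewrite (lt0r_neq0 hI).
Qed.

Lemma i14 : P1 -> P4.
Proof.
move=> H Y1 Y2 Z c1 c2 cZ sZ hZ; rewrite !PcondE.
have E1 : (Y1 :|: Z) :|: (Y2 :|: Z) = Y1 :|: Y2 :|: Z by rewrite setUACA setUid.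
have E2 : (Y1 :|: Z) :&: (Y2 :|: Z) = Z by rewrite -setUIl; apply/setUidPr.
apply: alg1; first by rewrite (lt0r_neq0 hZ).
by have := H _ _ (cplxU _ _ c1 cZ) (cplxU _ _ c2 cZ); rewrite E1 E2.
Qed.

Lemma i43 : P4 -> P3.
Proof.
move=> H Y1 Y2 c1 c2 hI; exact: H (cplxI _ _ c1 c2) (subxx _) hI.
Qed.

End Aux.

Theorem lemma3p1 (R : realFieldType) (n : nat) (p : {set {set 'I_n}} -> R)
  (hp : random_subcomplex p) :
  [<-> spatially_independent p;
       forall Y1 Y2 : {set {set 'I_n}}, is_complex Y1 -> is_complex Y2 ->
         0 < Pin p Y2 -> Pcond p Y1 Y2 = Pcond p Y1 (Y1 :&: Y2);
       forall Y1 Y2 : {set {set 'I_n}}, is_complex Y1 -> is_complex Y2 ->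
         0 < Pin p (Y1 :&: Y2) ->
         Pcond p (Y1 :|: Y2) (Y1 :&: Y2)
           = Pcond p Y1 (Y1 :&: Y2) * Pcond p Y2 (Y1 :&: Y2);
       forall Y1 Y2 Z : {set {set 'I_n}},
         is_complex Y1 -> is_complex Y2 -> is_complex Z ->
         Y1 :&: Y2 \subset Z -> 0 < Pin p Z ->
         Pcond p (Y1 :|: Y2) Z = Pcond p Y1 Z * Pcond p Y2 Z].
Proof.
tfae.
- exact: i12.
- by move=> h; apply: i13; apply: i21 hp h.
- by move=> h; apply: i14; apply: i31 hp h.
- by move=> h; apply: i31 hp _; apply: i43.
Qed.
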